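(* Let \[G=\langle a,b,c,s,t\mid sas^{-1}=ab,\ sbs^{-1}=b,\ scs^{-1}=c,\ tat^{-1}=ba,\ tbt^{-1}=b,\ tct^{-1}=c\rangle.\] Then the following subsets are equationally definable in $G$: (1) $\langle b\rangle$; (2) $\langle s\rangle$; (3) $\langle t\rangle$; (4) $\{(s^i,t^i)\mid i\in\mathbb{Z}\}\subseteq G^2$; (5) $\langle s,t\rangle$.
   Context: An equation over a finitely generated group $G$ with variables from a finite set $\mathcal X$ is an element $w\in G*F(\mathcal X)$, written $w=1$; a solution is a homomorphism $\phi:G*F(\mathcal X)\to G$ that is the identity on $G$ with $\phi(w)=1$; a system of equations is a finite set of equations in the same variables, solved by a common solution. A set $D\subseteq G^n$ is equationally definable if there is a system of equations $\mathcal E$ over $G$ and variables $X_1,\dots,X_n$ of $\mathcal E$ (not necessarily all variables) such that $D=\{(\phi(X_1),\dots,\phi(X_n)) \mid \phi \text{ a solution of } \mathcal E\}$. *)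

(* Defs.v *)
From HB Require Import structures.
From mathcomp Require Import all_boot all_order ssralg ssrint.
Set Implicit Arguments. Unset Strict Implicit. Unset Printing Implicit Defensive.
Local Open Scope group_scope.

Definition zpow (G : groupType) (g : G) (i : int) : G :=
  match i with
  | Posz n => g ^+ n
  | Negz n => (g ^+ n.+1)^-1
  end.

Definition is_subgroup (G : groupType) (H : G -> Prop) : Prop :=
  H 1 /\ (forall x y, H x -> H y -> H (x * y)) /\ (forall x, H x -> H x^-1).
Definition gen (G : groupType) (S : G -> Prop) (x : G) : Prop :=
  forall H : G -> Prop, is_subgroup H -> (forall y, S y -> H y) -> H x.

(* Equations over G with variables indexed by nat: an element of G * F(X) is
   represented by a word whose letters are constants of G or variables X_i^{±1}. *)
Inductive letter (G : groupType) : Type :=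
  | Const of G
  | Var of nat & bool (* Var i false = X_i, Var i true = X_i^-1 *).

Definition eval_letter (G : groupType) (phi : nat -> G) (l : letter G) : G :=
  match l with
  | Const g => g
  | Var i false => phi i
  | Var i true => (phi i)^-1
  end.

(* the image of a word under the homomorphism G * F(X) -> G that is the identity
   on G and sends X_i to phi i *)
Definition eval_word (G : groupType) (phi : nat -> G) (w : seq (letter G)) : G :=
  foldr (fun l acc => eval_letter phi l * acc) 1 w.

Definition equation (G : groupType) := seq (letter G).
Definition system (G : groupType) := seq (equation G).

Definition is_solution (G : groupType) (E : system G) (phi : nat -> G) : Prop :=
  forall k, (k < size E)%N -> eval_word phi (nth [::] E k) = 1.

Definition eq_definable (G : groupType) (n : nat) (D : ('I_n -> G) -> Prop) : Prop :=
  exists (E : system G) (X : 'I_n -> nat),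
    forall v : 'I_n -> G,
      D v <-> exists phi, is_solution E phi /\ (forall k, phi (X k) = v k).

Definition eq_definable1 (G : groupType) (D : G -> Prop) : Prop :=
  eq_definable (fun v : 'I_1 -> G => D (v ord0)).
Definition eq_definable2 (G : groupType) (D : G -> G -> Prop) : Prop :=
  eq_definable (fun v : 'I_2 -> G => D (v ord0) (v ord_max)).

Definition rels (H : groupType) (a b c s t : H) : Prop :=
  s * a * s^-1 = a * b /\ s * b * s^-1 = b /\ s * c * s^-1 = c /\
  t * a * t^-1 = b * a /\ t * b * t^-1 = b /\ t * c * t^-1 = c.

Definition group_hom (G H : groupType) (f : G -> H) : Prop :=
  forall x y, f (x * y) = f x * f y.

(* G together with a,b,c,s,t is (up to isomorphism) the group given by the
   presentation: universal property of the presented group *)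
Definition presents (G : groupType) (a b c s t : G) : Prop :=
  rels a b c s t /\
  forall (H : groupType) (a' b' c' s' t' : H), rels a' b' c' s' t' ->
    exists f : G -> H,
      (group_hom f /\ f a = a' /\ f b = b' /\ f c = c' /\ f s = s' /\ f t = t') /\
      forall g : G -> H,
        (group_hom g /\ g a = a' /\ g b = b' /\ g c = c' /\ g s = s' /\ g t = t') ->
        forall x, g x = f x.

(* Main.v *)
Require Import Defs.
From HB Require Import structures.
From mathcomp Require Import all_boot all_order ssralg ssrint.
From mathcomp Require Import zify.
Set Implicit Arguments. Unset Strict Implicit. Unset Printing Implicit Defensive.
Local Open Scope group_scope.


Definition L : Type := (nat * bool)%type.
Definition flip (x : L) : L := (x.1, ~~ x.2).
Lemma flipK : involutive flip. Proof. by case=> i e; rewrite /flip /= negbK. Qed.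

Fixpoint reduced (w : seq L) : bool :=
  if w is x :: w' then (if w' is y :: _ then y != flip x else true) && reduced w' else true.

Definition lact (x : L) (w : seq L) : seq L :=
  if w is y :: w' then (if y == flip x then w' else x :: w) else [:: x].

Lemma reduced_tl x w : reduced (x :: w) -> reduced w.
Proof. by case/andP. Qed.

Lemma reduced_lact x w : reduced w -> reduced (lact x w).
Proof.
case: w => [|y w'] //= H; case: ifP => E; first exact: reduced_tl H.
by rewrite /= E H.
Qed.

Lemma lactK x w : reduced w -> lact (flip x) (lact x w) = w.
Proof.
case: w => [|y w'] /=; first by rewrite flipK eqxx.
case: ifP => E H.
  move/eqP: E => E; subst y.
  case: w' H => [|z w''] //= /andP [H1 _].
  by rewrite (negbTE H1).
by rewrite /= flipK eqxx.
Qed.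

Lemma lact_cons x w : reduced (x :: w) -> lact x w = x :: w.
Proof. by case: w => [|y w'] //= /andP [H _]; rewrite (negbTE H). Qed.

Definition mulw (u v : seq L) := foldr lact v u.

Lemma mulw_red u v : reduced v -> reduced (mulw u v).
Proof. by elim: u => [|x u IH] //= H; apply: reduced_lact; apply: IH. Qed.

Lemma mulw_lact x u v : reduced v -> mulw (lact x u) v = lact x (mulw u v).
Proof.
case: u => [|y u] //= Hv; case: ifP => // /eqP E; subst y.
by rewrite -{1}(flipK x) lactK //; apply: mulw_red.
Qed.

Lemma mulwA u v w : reduced v -> reduced w -> mulw (mulw u v) w = mulw u (mulw v w).
Proof.
move=> Hv Hw; elim: u => [|x u IH] //=.
by rewrite mulw_lact ?IH //; apply: mulw_red.
Qed.

Lemma mulw1 u : reduced u -> mulw u [::] = u.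
Proof.
elim: u => [|x u IH] //= H; rewrite IH; last exact: reduced_tl H.
exact: lact_cons.
Qed.

Definition invw (u : seq L) := rev (map flip u).

Lemma mulVw u : mulw (invw u) u = [::].
Proof.
elim: u => [|x u IH] //=.
by rewrite /invw map_cons rev_cons /mulw foldr_rcons /= flipK eqxx.
Qed.

Lemma invwK u : invw (invw u) = u.
Proof. by rewrite /invw map_rev revK -map_comp (eq_map flipK) map_id. Qed.

Lemma reducedE w : reduced w = sorted (fun x y => y != flip x) w.
Proof. elim: w => [|x w IH] //=; case: w IH => [|y w] //= IH; by rewrite IH. Qed.

Lemma invw_red u : reduced u -> reduced (invw u).
Proof.
rewrite !reducedE /invw rev_sorted sorted_map.
apply: sub_sorted => x y /=.
apply: contra => /eqP ->; by rewrite flipK.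
Qed.

Definition FG : Type := {w : seq L | reduced w}.
HB.instance Definition _ := Choice.on FG.

Definition FGmul (x y : FG) : FG := exist _ (mulw (val x) (val y)) (mulw_red (val x) (valP y)).
Definition FGone : FG := exist _ [::] isT.
Definition FGinv (x : FG) : FG := exist _ (invw (val x)) (invw_red (valP x)).

Lemma FGmulA : associative FGmul.
Proof. by move=> x y z; apply: val_inj; rewrite /= mulwA //; apply: valP. Qed.
Lemma FGmul1 : left_id FGone FGmul.
Proof. by move=> x; apply: val_inj. Qed.
Lemma FGmulg1 : right_id FGone FGmul.
Proof. by move=> x; apply: val_inj; rewrite /= mulw1 //; apply: valP. Qed.
Lemma FGmulV : left_inverse FGone FGinv FGmul.
Proof. by move=> x; apply: val_inj; rewrite /= mulVw. Qed.
Lemma FGmulgV : right_inverse FGone FGinv FGmul.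
Proof. by move=> x; apply: val_inj; rewrite /= -{1}(invwK (val x)) mulVw. Qed.

HB.instance Definition _ := isGroup.Build FG FGmulA FGmul1 FGmulg1 FGmulV FGmulgV.

Lemma valM (x y : FG) : val (x * y) = mulw (val x) (val y). Proof. by []. Qed.
Lemma valV (x : FG) : val (x^-1) = invw (val x). Proof. by []. Qed.
Lemma val1 : val (1 : FG) = [::]. Proof. by []. Qed.


Section Hom.
Variables (H : groupType).
Lemma hom1 (G1 : groupType) (h : G1 -> H) : group_hom h -> h 1 = 1.
Proof. move=> hh; apply: (@mulgI _ (h 1)); by rewrite -hh !mulg1. Qed.
Lemma homV (G1 : groupType) (h : G1 -> H) x : group_hom h -> h x^-1 = (h x)^-1.
Proof. move=> hh; apply: (@mulgI _ (h x)); by rewrite -hh !mulgV hom1. Qed.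
Lemma homX (G1 : groupType) (h : G1 -> H) x n : group_hom h -> h (x ^+ n) = (h x) ^+ n.
Proof. move=> hh; elim: n => [|n IH]; first exact: hom1. by rewrite !expgS hh IH. Qed.
Lemma homZ (G1 : groupType) (h : G1 -> H) x i : group_hom h -> h (zpow x i) = zpow (h x) i.
Proof. by move=> hh; case: i => n; rewrite /zpow ?(homV (h:=h)) // (homX (h:=h)). Qed.

Variable e : L -> H.
Hypothesis e_inv : forall x, e (flip x) = (e x)^-1.
Definition ev (w : seq L) : H := foldr (fun y acc => e y * acc) 1 w.
Lemma ev_lact x w : ev (lact x w) = e x * ev w.
Proof.
case: w => [|y w] /=; first by [].
case: ifP => // /eqP ->; by rewrite e_inv mulgA mulgV mul1g.
Qed.
Lemma ev_mulw u v : ev (mulw u v) = ev u * ev v.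
Proof. elim: u => [|x u IH] /=; first by rewrite mul1g. by rewrite ev_lact IH mulgA. Qed.
Lemma evF_hom : group_hom (fun w : FG => ev (val w)).
Proof. by move=> x y; exact: (ev_mulw (val x) (val y)). Qed.
End Hom.

Definition lt (x : L) : FG := exist _ [:: x] isT.
Lemma lt_flip x : lt (flip x) = (lt x)^-1. Proof. by apply: val_inj. Qed.

Lemma FG_ind (P : FG -> Prop) : P 1 -> (forall x w, P w -> P (lt x * w)) -> forall w, P w.
Proof.
move=> P1 PS [l pf]; elim: l pf => [|x l IH] pf.
  by have -> : exist _ [::] pf = (1 : FG) by apply: val_inj.
have pf' := reduced_tl pf.
have -> : exist _ (x :: l) pf = lt x * exist _ l pf'.
  by apply: val_inj; rewrite /= lact_cons.
exact/PS/IH.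
Qed.

Definition genN j : FG := lt (j, false).

Lemma hom_uniq (H : groupType) (h1 h2 : FG -> H) : group_hom h1 -> group_hom h2 ->
  (forall j, h1 (genN j) = h2 (genN j)) -> forall w, h1 w = h2 w.
Proof.
move=> hh1 hh2 E; apply: FG_ind; first by rewrite !hom1.
move=> [j d] w IH; rewrite hh1 hh2 IH; congr (_ * _).
case: d; last exact: E.
have -> : (j, true) = flip (j, false) by [].
by rewrite lt_flip (homV (h:=h1)) // (homV (h:=h2)) //; congr (_^-1); exact: E.
Qed.

Definition img (l : L) (j : nat) : FG :=
  match l, j with
  | (0, false), 0 => genN 0 * genN 1
  | (0, true), 0 => genN 0 * (genN 1)^-1
  | (1, false), 0 => genN 1 * genN 0
  | (1, true), 0 => (genN 1)^-1 * genN 0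
  | _, _ => genN j end.
Definition eimg l (y : L) := if y.2 then (img l y.1)^-1 else img l y.1.
Lemma eimg_inv l y : eimg l (flip y) = (eimg l y)^-1.
Proof. by case: y => j [] //=; rewrite /eimg /= invgK. Qed.

Definition phi l (w : FG) : FG := ev (eimg l) (val w).
Lemma phi_hom l : group_hom (phi l).
Proof. exact: evF_hom (eimg_inv l). Qed.
Lemma phi_gen l j : phi l (genN j) = img l j.
Proof. by rewrite /phi /= /eimg /= mulg1. Qed.

Lemma phiK l w : phi l (phi (flip l) w) = w.
Proof.
have hh : group_hom (fun w => phi l (phi (flip l) w)).
  by move=> x y; rewrite !phi_hom.
apply: (hom_uniq hh (h2 := id)) => // j.
rewrite phi_gen.
case: l hh => [[|[|i]] [|]] hh; case: j => [|j] /=.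
all: try (rewrite phi_gen //).
all: rewrite phi_hom ?(homV _ (phi_hom _)) !phi_gen /=.
all: by rewrite ?mulgK ?mulgVK ?mulKg ?mulVKg.
Qed.


Definition Phi (l : seq L) (w : FG) : FG := foldr (fun x acc => phi x acc) w l.
Lemma Phi_hom l : group_hom (Phi l).
Proof.
elim: l => [|x l IH] // u v.
change (phi x (Phi l (u*v)) = phi x (Phi l u) * phi x (Phi l v)).
by rewrite IH phi_hom.
Qed.
Lemma Phi_lact x l w : Phi (lact x l) w = phi x (Phi l w).
Proof.
case: l => [|y l] //=; case: ifP => // /eqP ->.
by change (Phi l w = phi x (phi (flip x) (Phi l w))); rewrite phiK.
Qed.
Lemma Phi_mulw u v w : Phi (mulw u v) w = Phi u (Phi v w).
Proof.
elim: u => [|x u IH] //.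
change (Phi (lact x (mulw u v)) w = phi x (Phi u (Phi v w))).
by rewrite Phi_lact IH.
Qed.
Lemma PhiM (u v : FG) w : Phi (val (u * v)) w = Phi (val u) (Phi (val v) w).
Proof. exact: Phi_mulw. Qed.
Lemma Phi1 w : Phi (val (1 : FG)) w = w. Proof. by []. Qed.
Lemma PhiV (u : FG) w : Phi (val u^-1) (Phi (val u) w) = w.
Proof. by rewrite -PhiM mulVg. Qed.
Lemma PhiVr (u : FG) w : Phi (val u) (Phi (val u^-1) w) = w.
Proof. by rewrite -PhiM mulgV. Qed.

Definition K : Type := (FG * FG)%type.
HB.instance Definition _ := Choice.on K.

Definition Kmul (x y : K) : K := (x.1 * Phi (val x.2) y.1, x.2 * y.2).
Definition Kone : K := (1, 1).
Definition Kinv (x : K) : K := (Phi (val (x.2^-1)) (x.1^-1), x.2^-1).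

Lemma KmulA : associative Kmul.
Proof.
move=> [x1 x2] [y1 y2] [z1 z2]; rewrite /Kmul /=.
by rewrite PhiM Phi_hom !mulgA.
Qed.
Lemma Kmul1 : left_id Kone Kmul.
Proof. by move=> [x1 x2]; rewrite /Kmul /= !mul1g. Qed.
Lemma Kmulg1 : right_id Kone Kmul.
Proof. by move=> [x1 x2]; rewrite /Kmul /= (hom1 (Phi_hom _)) !mulg1. Qed.
Lemma KmulV : left_inverse Kone Kinv Kmul.
Proof.
move=> [x1 x2]; rewrite /Kmul /Kinv /= -Phi_hom !mulVg.
by rewrite (hom1 (Phi_hom (val x2^-1))).
Qed.
Lemma KmulgV : right_inverse Kone Kinv Kmul.
Proof. by move=> [x1 x2]; rewrite /Kmul /Kinv /= PhiVr !mulgV. Qed.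

HB.instance Definition _ := isGroup.Build K KmulA Kmul1 Kmulg1 KmulV KmulgV.

Lemma KmulE (w1 u1 w2 u2 : FG) : ((w1, u1) : K) * (w2, u2) = (w1 * Phi (val u1) w2, u1 * u2).
Proof. by []. Qed.
Lemma KinvE (w u : FG) : ((w, u) : K)^-1 = (Phi (val u^-1) w^-1, u^-1).
Proof. by []. Qed.
Lemma K1E : (1 : K) = (1, 1). Proof. by []. Qed.


Lemma cons_rcons (x y : L) l : x :: l = rcons l y -> all (pred1 x) l.
Proof.
elim: l => [|w l IH] //= [E1 E2]; subst w; rewrite eqxx /=.
exact: IH.
Qed.

Lemma mulw_cat p v : reduced (p ++ v) -> mulw p v = p ++ v.
Proof.
elim: p => [|z p IH] //= H.
rewrite IH; first exact: lact_cons.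
exact: reduced_tl H.
Qed.

Lemma reduced_rcons p y : reduced (rcons p y) -> reduced p.
Proof. by rewrite -cats1 reducedE => /cat_sorted2 []; rewrite -reducedE. Qed.

Definition pw (x : L) (l : seq L) := all (pred1 x) l || all (pred1 (flip x)) l.

Lemma comm_raw x l : reduced l -> lact x l = mulw l [:: x] -> pw x l.
Proof.
case: (lastP l) => [|p y] //= Hr.
have Hp := reduced_rcons Hr.
rewrite /mulw foldr_rcons -/(mulw p _).
have [z [l' El]] : exists z l', rcons p y = z :: l' by case: p {Hr Hp} => [|q p]; do 2 eexists.
have Hs : size l' = size p by have := congr1 size El; rewrite size_rcons /= => -[].
rewrite El /pw.
have -> : lact y [:: x] = if x == flip y then [::] else [:: y; x] by [].
have -> : lact x (z :: l') = if z == flip x then l' else x :: z :: l' by [].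
have [Exy | Nxy] := eqVneq x (flip y).
  rewrite Exy mulw1 // -Exy.
  have [Ez | Nz] := eqVneq z (flip x).
    move=> E; subst l'. have Hall := cons_rcons (esym El).
    by rewrite /= -Ez eqxx Hall /= orbT.
  move=> E.
  by have := congr1 size E; rewrite /= Hs; lia.
rewrite mulw_cat; last first.
  by rewrite reducedE sorted_cat_cons -reducedE Hr /= andbT.
have [Ez | Nz] := eqVneq z (flip x).
  move=> E.
  by have := congr1 size E; rewrite size_cat /= Hs; lia.
move=> E.
rewrite -cat_rcons El in E.
have : x :: z :: l' = rcons (z :: l') x by rewrite -cats1 -E.
by move/cons_rcons => /= ->.
Qed.

Lemma flip_neq (y : L) : (y == flip y) = false.
Proof. by case: y => i [] ; rewrite /flip xpair_eqE eqxx. Qed.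

Lemma lt_pow y n : val ((lt y) ^+ n) = nseq n y.
Proof.
elim: n => [|n IH] //; rewrite expgS.
change (lact y (val ((lt y) ^+ n)) = y :: nseq n y).
rewrite IH; case: n {IH} => [|n] //=.
by rewrite flip_neq.
Qed.

Lemma comm_pw x (w : FG) : w * lt x = lt x * w -> pw x (val w).
Proof.
move=> H; apply: comm_raw (valP w) _.
exact: (congr1 val (esym H)).
Qed.

Lemma pw_zpow x (w : FG) : pw x (val w) -> exists i, w = zpow (lt x) i.
Proof.
case/orP => /all_pred1P E.
  exists (Posz (size (val w))); apply: val_inj; by rewrite /= lt_pow.
case: (size (val w)) E => [|n] E.
  by exists 0; apply: val_inj; rewrite E.
exists (Negz n); apply: val_inj; rewrite E.
change (nseq n.+1 (flip x) = invw (val ((lt x)^+ n.+1))).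
by rewrite lt_pow /invw map_nseq rev_nseq.
Qed.

Lemma pw_nil x y l : x.1 != y.1 -> pw x l -> pw y l -> l = [::].
Proof.
case: l => [|z l] // N H1 H2.
have h1 : z.1 = x.1 by case/orP: H1 => /andP [/eqP -> _].
have h2 : z.1 = y.1 by case/orP: H2 => /andP [/eqP -> _].
by rewrite -h1 h2 eqxx in N.
Qed.

Lemma zpow_lt_inj y i j : zpow (lt y) i = zpow (lt y) j -> i = j.
Proof.
have V : forall k, val (zpow (lt y) k) =
   (match k with Posz n => nseq n y | Negz n => nseq n.+1 (flip y) end).
  case=> n; first exact: lt_pow.
  change (invw (val ((lt y)^+ n.+1)) = nseq n.+1 (flip y)).
  by rewrite lt_pow /invw map_nseq rev_nseq.
move/(congr1 val); rewrite !V.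
have Ny : y != flip y by rewrite flip_neq.
case: i => n; case: j => m.
- by move/(congr1 size); rewrite !size_nseq => ->.
- by case: n => [|n] //= [] E; rewrite -E eqxx in Ny.
- by case: m => [|m] //= [] E; rewrite E eqxx in Ny.
- by move/(congr1 size); rewrite !size_nseq => -[] ->.
Qed.


Lemma phi_genS l j : phi l (genN j.+1) = genN j.+1.
Proof. by rewrite phi_gen; case: l => [[|[|i]] []]. Qed.
Lemma Phi_genS l j : Phi l (genN j.+1) = genN j.+1.
Proof. elim: l => [|x l IH] //=. change (phi x (Phi l (genN j.+1)) = genN j.+1). by rewrite IH phi_genS. Qed.
Lemma Phi_one l : Phi l 1 = 1. Proof. exact: (hom1 (Phi_hom l)). Qed.

Lemma Kconj (u w : FG) : ((1, u) : K) * ((w, 1) : K) * ((1, u) : K)^-1 = (Phi (val u) w, 1).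
Proof.
rewrite KinvE !KmulE /=. rewrite invg1 !Phi_one !mulg1 mul1g mulgV.
by [].
Qed.

Lemma Phi_single i w : Phi (val (genN i)) w = phi (i, false) w. Proof. by []. Qed.

Definition Ka : K := (genN 0, 1).
Definition Kb : K := (genN 1, 1).
Definition Kc : K := (genN 2, 1).
Definition Ks : K := (1, genN 0).
Definition Kt : K := (1, genN 1).

Lemma Krels : rels Ka Kb Kc Ks Kt.
Proof.
rewrite /rels /Ka /Kb /Kc /Ks /Kt !Kconj !KmulE /= !mulg1.
by rewrite !phi_gen.
Qed.


Section Main.
Variables (G : groupType) (a b c s t : G).
Hypothesis HR : rels a b c s t.

Definition genG j : G := match j with 0 => a | 1 => b | 2 => c | _ => 1 end.
Definition eN (y : L) : G := if y.2 then (genG y.1)^-1 else genG y.1.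
Definition genT j : G := match j with 0 => s | 1 => t | _ => 1 end.
Definition eT (y : L) : G := if y.2 then (genT y.1)^-1 else genT y.1.
Lemma eN_inv y : eN (flip y) = (eN y)^-1.
Proof. by case: y => j [] //=; rewrite /eN /= invgK. Qed.
Lemma eT_inv y : eT (flip y) = (eT y)^-1.
Proof. by case: y => j [] //=; rewrite /eT /= invgK. Qed.

Definition evN (w : FG) : G := ev eN (val w).
Definition evT (w : FG) : G := ev eT (val w).
Lemma evN_hom : group_hom evN. Proof. exact: evF_hom eN_inv. Qed.
Lemma evT_hom : group_hom evT. Proof. exact: evF_hom eT_inv. Qed.
Lemma evN_gen j : evN (genN j) = genG j. Proof. exact: mulg1. Qed.

Lemma conjM (g x y : G) : g * (x * y) * g^-1 = (g * x * g^-1) * (g * y * g^-1).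
Proof. by rewrite !mulgA mulgVK. Qed.
Lemma conj_hom (g : G) : group_hom (fun x : G => g * x * g^-1).
Proof. by move=> x y; rewrite conjM. Qed.

Lemma conjV_of (g x y : G) : g * y * g^-1 = x -> g^-1 * x * g^-1^-1 = y.
Proof. by move=> <-; rewrite invgK !mulgA mulVg mul1g mulgVK. Qed.

Lemma evN_phi l w : evN (phi l w) = eT l * evN w * (eT l)^-1.
Proof.
have h1 : group_hom (fun w => evN (phi l w)) by move=> x y; rewrite phi_hom evN_hom.
have h2 : group_hom (fun w => eT l * evN w * (eT l)^-1).
  by move=> x y; rewrite evN_hom conjM.
apply: (hom_uniq h1 h2) => j.
case: HR => [sa [sb [sc [ta [tb tc]]]]].
have sb' := conjV_of sb. have sc' := conjV_of sc.
have tb' := conjV_of tb. have tc' := conjV_of tc.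
have sa' : s^-1 * a * s^-1^-1 = a * b^-1.
  have := conjV_of sa; rewrite conjM sb' => E; by rewrite -{2}E mulgK.
have ta' : t^-1 * a * t^-1^-1 = b^-1 * a.
  have := conjV_of ta; rewrite conjM tb' => E; by rewrite -{2}E mulKg.
rewrite phi_gen evN_gen.
case: l {h1 h2} => [[|[|i]] []]; case: j => [|[|[|j]]] /=;
  rewrite ?evN_hom ?(homV _ evN_hom) ?evN_gen /eT /= ?invg1 ?mulg1 ?mul1g ?mulgV //;
  by rewrite ?sa ?sb ?sc ?ta ?tb ?tc ?sa' ?sb' ?sc' ?ta' ?tb' ?tc'.
Qed.

Lemma evN_Phi l w : evN (Phi l w) = ev eT l * evN w * (ev eT l)^-1.
Proof.
elim: l => [|x l IH] /=; first by rewrite mul1g invg1 mulg1.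
change (evN (phi x (Phi l w)) = eT x * ev eT l * evN w * (eT x * ev eT l)^-1).
by rewrite evN_phi IH invgM !mulgA.
Qed.

Definition gK (x : K) : G := evN x.1 * evT x.2.
Lemma gK_hom : group_hom gK.
Proof.
move=> [w1 u1] [w2 u2]; rewrite KmulE /gK /=.
rewrite evN_hom evN_Phi evT_hom.
rewrite /evT !mulgA; congr (_ * _); rewrite -!mulgA; congr (_ * _).
by rewrite !mulgA mulgVK.
Qed.
End Main.

Section Pres.
Variables (G : groupType) (a b c s t : G).
Hypothesis HP : presents a b c s t.

Lemma HR : rels a b c s t. Proof. by case: HP. Qed.

Lemma iso : exists f : G -> K, group_hom f /\ f a = Ka /\ f b = Kb /\ f c = Kc /\ f s = Ks /\ f t = Kt /\ forall x, gK a b c s t (f x) = x.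
Proof.
case: HP => HR' U.
case: (U K _ _ _ _ _ Krels) => f [[fh [fa [fb [fc [fs ft]]]]] _].
case: (U G _ _ _ _ _ HR') => f0 [_ Uq].
exists f; do 6 (split => //).
have I1 := Uq id.
have I2 := Uq (fun x => gK a b c s t (f x)).
move=> x; rewrite I2; first by rewrite -(I1 _ x).
split; first by move=> y z; rewrite fh gK_hom.
by rewrite fa fb fc fs ft /gK /Ka /Kb /Kc /Ks /Kt /= /evT /evN /= !mulg1 !mul1g.
Qed.
End Pres.


Lemma KcommB (w u : FG) : ((w, u) : K) * Kb = Kb * (w, u) -> w * genN 1 = genN 1 * w.
Proof. by rewrite /Kb !KmulE /= Phi_genS; move/(congr1 fst). Qed.
Lemma KcommC (w u : FG) : ((w, u) : K) * Kc = Kc * (w, u) -> w * genN 2 = genN 2 * w.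
Proof. by rewrite /Kc !KmulE /= Phi_genS; move/(congr1 fst). Qed.
Lemma KcommS (w u : FG) : ((w, u) : K) * Ks = Ks * (w, u) -> u * genN 0 = genN 0 * u.
Proof. by rewrite /Ks !KmulE /= Phi_one; move/(congr1 snd). Qed.
Lemma KcommT (w u : FG) : ((w, u) : K) * Kt = Kt * (w, u) -> u * genN 1 = genN 1 * u.
Proof. by rewrite /Kt !KmulE /= Phi_one; move/(congr1 snd). Qed.

Lemma pw_one x y (u : FG) : x.1 != y.1 -> pw x (val u) -> pw y (val u) -> u = 1.
Proof. by move=> N H1 H2; apply: val_inj; rewrite /= (pw_nil N H1 H2). Qed.

Section Core.
Variables (G : groupType) (a b c s t : G).
Hypothesis HP : presents a b c s t.

Lemma core_b x : x * b = b * x -> x * s = s * x -> x * t = t * x -> exists i, x = zpow b i.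
Proof.
have [f [fh [fa [fb [fc [fs [ft fK]]]]]]] := iso HP.
move=> Cb Cs Ct.
have Kb' : f x * Kb = Kb * f x by rewrite -fb -!fh Cb.
have Ks' : f x * Ks = Ks * f x by rewrite -fs -!fh Cs.
have Kt' : f x * Kt = Kt * f x by rewrite -ft -!fh Ct.
move: (fK x) Kb' Ks' Kt'; case: (f x) => w u Ex Hb Hs Ht.
have [i Ew] := pw_zpow (comm_pw (KcommB Hb)).
have Eu : u = 1 := pw_one (x := (0%N,false)) (y := (1%N,false)) isT (comm_pw (KcommS Hs)) (comm_pw (KcommT Ht)).
exists i; rewrite -Ex /gK /= Eu Ew.
rewrite /evT /= mulg1 (homZ _ _ (evN_hom a b c)).
by congr zpow; apply: evN_gen.
Qed.

Lemma evT_genS j : evT s t (genN j) = genT s t j. Proof. exact: mulg1. Qed.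

Lemma core_s x : x * s = s * x -> x * b = b * x -> x * c = c * x -> exists i, x = zpow s i.
Proof.
have [f [fh [fa [fb [fc [fs [ft fK]]]]]]] := iso HP.
move=> Cs Cb Cc.
have Kb' : f x * Kb = Kb * f x by rewrite -fb -!fh Cb.
have Kc' : f x * Kc = Kc * f x by rewrite -fc -!fh Cc.
have Ks' : f x * Ks = Ks * f x by rewrite -fs -!fh Cs.
move: (fK x) Kb' Ks' Kc'; case: (f x) => w u Ex Hb Hs Hc.
have [i Eu] := pw_zpow (comm_pw (KcommS Hs)).
have Ew : w = 1 := pw_one (x := (1%N,false)) (y := (2%N,false)) isT (comm_pw (KcommB Hb)) (comm_pw (KcommC Hc)).
exists i; rewrite -Ex /gK /= Eu Ew (hom1 (evN_hom a b c)) mul1g.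
rewrite (homZ _ _ (evT_hom s t)).
by congr zpow; apply: evT_genS.
Qed.

Lemma core_t x : x * t = t * x -> x * b = b * x -> x * c = c * x -> exists i, x = zpow t i.
Proof.
have [f [fh [fa [fb [fc [fs [ft fK]]]]]]] := iso HP.
move=> Ct Cb Cc.
have Kb' : f x * Kb = Kb * f x by rewrite -fb -!fh Cb.
have Kc' : f x * Kc = Kc * f x by rewrite -fc -!fh Cc.
have Kt' : f x * Kt = Kt * f x by rewrite -ft -!fh Ct.
move: (fK x) Kb' Kt' Kc'; case: (f x) => w u Ex Hb Ht Hc.
have [i Eu] := pw_zpow (comm_pw (KcommT Ht)).
have Ew : w = 1 := pw_one (x := (1%N,false)) (y := (2%N,false)) isT (comm_pw (KcommB Hb)) (comm_pw (KcommC Hc)).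
exists i; rewrite -Ex /gK /= Eu Ew (hom1 (evN_hom a b c)) mul1g.
rewrite (homZ _ _ (evT_hom s t)).
by congr zpow; apply: evT_genS.
Qed.

Lemma ev_gen (H : G -> Prop) l : is_subgroup H -> H s -> H t -> H (ev (eT s t) l).
Proof.
move=> [H1 [HM HV]] Hs Ht; elim: l => [|y l IH] //=.
apply: HM => //; case: y => [[|[|j]] []]; rewrite /eT /=; by auto.
Qed.

Lemma core_st x : x * b = b * x -> x * c = c * x -> gen (fun y => y = s \/ y = t) x.
Proof.
have [f [fh [fa [fb [fc [fs [ft fK]]]]]]] := iso HP.
move=> Cb Cc.
have Kb' : f x * Kb = Kb * f x by rewrite -fb -!fh Cb.
have Kc' : f x * Kc = Kc * f x by rewrite -fc -!fh Cc.
move: (fK x) Kb' Kc'; case: (f x) => w u Ex Hb Hc.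
have Ew : w = 1 := pw_one (x := (1%N,false)) (y := (2%N,false)) isT (comm_pw (KcommB Hb)) (comm_pw (KcommC Hc)).
rewrite -Ex /gK /= Ew (hom1 (evN_hom a b c)) mul1g => H HH HS.
by apply: ev_gen => //; apply: HS; [left|right].
Qed.

Lemma iota_hom : group_hom (fun w : FG => ((w, 1) : K)).
Proof. by move=> x y; rewrite KmulE /= mulg1. Qed.

Lemma zpowb_inj i j : zpow b i = zpow b j -> i = j.
Proof.
have [f [fh [fa [fb [fc [fs [ft fK]]]]]]] := iso HP.
move/(congr1 f); rewrite !(homZ _ _ fh) fb /Kb.
rewrite -!(homZ _ _ iota_hom) => /(congr1 fst) /=.
exact: zpow_lt_inj.
Qed.
End Core.



Section Fin.
Variable G : groupType.

Lemma comm_sub (g : G) : is_subgroup (fun x => x * g = g * x).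
Proof.
split; first by rewrite mul1g mulg1.
split; first by move=> x y Hx Hy; apply: commute_sym; apply: commuteM; apply: commute_sym.
by move=> x Hx; apply: commute_sym; apply: commuteV; apply: commute_sym.
Qed.

Lemma sub_and (P Q : G -> Prop) : is_subgroup P -> is_subgroup Q -> is_subgroup (fun x => P x /\ Q x).
Proof.
move=> [P1 [PM PV]] [Q1 [QM QV]]; split => //; split.
  by move=> x y [] ? ? [] ? ?; split; auto.
by move=> x [] ? ?; split; auto.
Qed.

Lemma sub_zpow (P : G -> Prop) g i : is_subgroup P -> P g -> P (zpow g i).
Proof.
move=> [P1 [PM PV]] Pg.
have Pn : forall n, P (g ^+ n) by elim=> [|n IH] //; rewrite expgS; auto.
by case: i => n /=; auto.
Qed.

Lemma zpow_comm (g h : G) i : g * h = h * g -> zpow g i * h = h * zpow g i.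
Proof. by move=> C; apply: (sub_zpow i (comm_sub h)). Qed.

Lemma gen_sub (S P : G -> Prop) x : is_subgroup P -> (forall y, S y -> P y) -> gen S x -> P x.
Proof. by move=> HP HS; apply. Qed.

Definition commE (k : nat) (g : G) : equation G :=
  [:: @Var G k false; Const g; @Var G k true; Const g^-1].

Lemma commE_ok (phi : nat -> G) k (g : G) : eval_word phi (commE k g) = 1 <-> phi k * g = g * phi k.
Proof.
rewrite /eval_word /= mulg1; split => H.
  have := congr1 (fun z => z * g * phi k) H; rewrite /= !mulgA !mulgVK mul1g.
  by [].
by rewrite !mulgA H mulgK mulgV.
Qed.

Lemma sol_cons (e : equation G) (E : system G) (phi : nat -> G) : is_solution (e :: E) phi <-> eval_word phi e = 1 /\ is_solution E phi.
Proof.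
split.
  by move=> H; split; [exact: (H 0%N isT) | move=> k Hk; exact: (H k.+1 Hk)].
by case=> H1 H2 [|k] Hk //=; apply: H2.
Qed.

Lemma sol_nil (phi : nat -> G) : is_solution [::] phi <-> True.
Proof. by []. Qed.

Lemma def1 (D : G -> Prop) (E : system G) :
  (forall phi, is_solution E phi <-> D (phi 0%N)) -> eq_definable1 D.
Proof.
move=> H; exists E, (fun _ => 0%N) => v; split.
  by move=> Dv; exists (fun _ => v ord0); split; [apply/H | move=> k; rewrite (ord1 k)].
by case=> phi [Hs Hk]; rewrite -(Hk ord0); apply/H.
Qed.

Lemma def2 (D : G -> G -> Prop) (E : system G) :
  (forall phi, is_solution E phi <-> D (phi 0%N) (phi 1%N)) -> eq_definable2 D.
Proof.
move=> H; exists E, (fun k : 'I_2 => val k) => v; split.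
  move=> Dv; exists (fun n => if n == 0%N then v ord0 else v ord_max); split.
    by apply/H.
  case=> [[|[|m]] Hk] /=.
  - by congr v; apply: val_inj.
  - by congr v; apply: val_inj.
  - by [].
by case=> phi [Hs Hk]; rewrite -(Hk ord0) -(Hk ord_max); apply/H.
Qed.

Lemma conj_negA (X Y A : G) : X * Y = Y * X -> X * A = A * Y * X -> X^-1 * A = A * Y^-1 * X^-1.
Proof.
move=> C E; apply: (@mulgI _ X); rewrite mulgA mulgV mul1g !mulgA E.
by rewrite -(mulgA A Y X) -C mulgA mulgK mulgK.
Qed.

Lemma conj_negB (X Y A : G) : X * Y = Y * X -> X * A = Y * A * X -> X^-1 * A = Y^-1 * A * X^-1.
Proof.
move=> C E; apply: (@mulgI _ X); rewrite mulgA mulgV mul1g !mulgA.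
have C' : X * Y^-1 = Y^-1 * X by apply: commuteV.
by rewrite C' -(mulgA (Y^-1) X A) E !mulgA mulVg mul1g mulgK.
Qed.
End Fin.

Section Fin2.
Variables (G : groupType) (a b c s t : G).
Hypothesis HP : presents a b c s t.

Lemma relsE : s * a = a * b * s /\ s * b = b * s /\ s * c = c * s /\ t * a = b * a * t /\
   t * b = b * t /\ t * c = c * t.
Proof.
case: (HR HP) => [sa [sb [sc [ta [tb tc]]]]].
by do ![split]; [rewrite -sa | rewrite -{2}sb | rewrite -{2}sc | rewrite -ta | rewrite -{2}tb | rewrite -{2}tc];
  rewrite mulgVK.
Qed.

Lemma zs_a i : zpow s i * a = a * zpow b i * zpow s i.
Proof.
have [sa [sb _]] := relsE.
have N : forall n, s ^+ n * a = a * b ^+ n * s ^+ n.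
  elim=> [|n IH]; first by rewrite !mulg1 mul1g.
  rewrite !expgS -mulgA IH !mulgA sa -!mulgA; congr (_ * (_ * _)).
  by rewrite !mulgA (commuteX n sb).
case: i => n /=; first exact: N.
apply: conj_negA; last exact: N.
by apply: commuteX2; apply: commute_sym.
Qed.

Lemma zt_a i : zpow t i * a = zpow b i * a * zpow t i.
Proof.
have [_ [_ [_ [ta [tb _]]]]] := relsE.
have N : forall n, t ^+ n * a = b ^+ n * a * t ^+ n.
  elim=> [|n IH]; first by rewrite !mulg1 mul1g.
  rewrite !expgS -mulgA IH !mulgA (commuteX n tb) -(mulgA _ t a) ta !mulgA.
  by rewrite (commuteX n (commute_refl b)).
case: i => n /=; first exact: N.
apply: conj_negB; last exact: N.
by apply: commuteX2; apply: commute_sym.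
Qed.
End Fin2.


Definition eq4 (G : groupType) (a : G) : equation G :=
  [:: Const a^-1; @Var G 0 false; Const a; @Var G 0 true; Const a; @Var G 1 false;
      Const a^-1; @Var G 1 true].

Lemma eq4_val (G : groupType) (a Bi Bj : G) (phi : nat -> G) :
  phi 0%N * a = a * Bi * phi 0%N -> phi 1%N * a = Bj * a * phi 1%N ->
  eval_word phi (eq4 a) = Bi * Bj^-1.
Proof.
set x := phi 0%N; set y := phi 1%N => Hx Hy.
have -> : eval_word phi (eq4 a) = (a^-1 * x * a * x^-1) * (a * y * a^-1 * y^-1)
  by rewrite /eval_word /= mulg1 !mulgA.
have L1 : a^-1 * x * a * x^-1 = Bi by rewrite -(mulgA _ x a) Hx !mulgA mulVg mul1g mulgK.
have L2 : y * a * y^-1 * a^-1 = Bj by rewrite Hy mulgK mulgK.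
have L2' : a * y * a^-1 * y^-1 = Bj^-1 by rewrite -L2 !invgM !invgK !mulgA.
by rewrite L1 L2'.
Qed.

Unset Implicit Arguments.

Theorem lemma6p4 (G : groupType) (a b c s t : G) :
  presents a b c s t ->
  [/\ eq_definable1 (gen (fun x => x = b)),
      eq_definable1 (gen (fun x => x = s)),
      eq_definable1 (gen (fun x => x = t)),
      eq_definable2 (fun x y => exists i : int, x = zpow s i /\ y = zpow t i)
    & eq_definable1 (gen (fun x => x = s \/ x = t))].
Proof.
move=> HP; have [sa [sb [sc [ta [tb tc]]]]] := relsE HP.
split.
- apply: (@def1 G _ [:: commE 0 b; commE 0 s; commE 0 t]) => phi.
  rewrite !sol_cons !commE_ok sol_nil; split.
    case=> Cb [Cs [Ct _]]; have [i ->] := core_b HP Cb Cs Ct.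
    by move=> H HH HS; apply: sub_zpow HH (HS _ erefl).
  move=> Hg.
  have HS : forall y, y = b -> (y * b = b * y /\ y * s = s * y) /\ y * t = t * y.
    by move=> y ->; do !split; rewrite ?sb ?sc ?tb ?tc.
  have [[Cb Cs] Ct] := gen_sub (sub_and (sub_and (comm_sub b) (comm_sub s)) (comm_sub t)) HS Hg.
  by do !split.
- apply: (@def1 G _ [:: commE 0 s; commE 0 b; commE 0 c]) => phi.
  rewrite !sol_cons !commE_ok sol_nil; split.
    case=> Cs [Cb [Cc _]]; have [i ->] := core_s HP Cs Cb Cc.
    by move=> H HH HS; apply: sub_zpow HH (HS _ erefl).
  move=> Hg.
  have HS : forall y, y = s -> (y * s = s * y /\ y * b = b * y) /\ y * c = c * y.
    by move=> y ->; do !split; rewrite ?sb ?sc ?tb ?tc.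
  have [[Cs Cb] Cc] := gen_sub (sub_and (sub_and (comm_sub s) (comm_sub b)) (comm_sub c)) HS Hg.
  by do !split.
- apply: (@def1 G _ [:: commE 0 t; commE 0 b; commE 0 c]) => phi.
  rewrite !sol_cons !commE_ok sol_nil; split.
    case=> Ct [Cb [Cc _]]; have [i ->] := core_t HP Ct Cb Cc.
    by move=> H HH HS; apply: sub_zpow HH (HS _ erefl).
  move=> Hg.
  have HS : forall y, y = t -> (y * t = t * y /\ y * b = b * y) /\ y * c = c * y.
    by move=> y ->; do !split; rewrite ?sb ?sc ?tb ?tc.
  have [[Ct Cb] Cc] := gen_sub (sub_and (sub_and (comm_sub t) (comm_sub b)) (comm_sub c)) HS Hg.
  by do !split.
- apply: (@def2 G _ [:: commE 0 s; commE 0 b; commE 0 c; commE 1 t; commE 1 b; commE 1 c; eq4 a]) => phi.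
  rewrite !sol_cons !commE_ok sol_nil; split.
    case=> Cs [Cb [Cc [Ct [Cb' [Cc' [E4 _]]]]]].
    have [i Ei] := core_s HP Cs Cb Cc.
    have [j Ej] := core_t HP Ct Cb' Cc'.
    rewrite (eq4_val (Bi := zpow b i) (Bj := zpow b j)) in E4; first last.
    + by rewrite Ej (zt_a HP).
    + by rewrite Ei (zs_a HP).
    have Eij : i = j by apply: (zpowb_inj HP); apply: divg1_eq.
    by exists i; rewrite Ei Ej Eij.
  case=> i [Ei Ej]; rewrite Ei Ej.
  do !split; try (apply: zpow_comm; by []).
  rewrite (eq4_val (Bi := zpow b i) (Bj := zpow b i)) ?mulgV //.
    by rewrite Ei (zs_a HP).
  by rewrite Ej (zt_a HP).
- apply: (@def1 G _ [:: commE 0 b; commE 0 c]) => phi.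
  rewrite !sol_cons !commE_ok sol_nil; split.
    case=> Cb [Cc _]; exact (core_st HP Cb Cc).
  move=> Hg.
  have HS : forall y, y = s \/ y = t -> y * b = b * y /\ y * c = c * y.
    by move=> y [] ->; do !split; rewrite ?sb ?sc ?tb ?tc.
  have [Cb Cc] := gen_sub (sub_and (comm_sub b) (comm_sub c)) HS Hg.
  by do !split.
Qed.
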